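(* Let $(V,\{A,B\})$ be a forking problem with $n$ agents and a monotonic profile. Suppose there exist $k_1,k_2\in\{1,\dots,n\}$ with $k_1\le|V_A^*|$ and $k_2\le|V_B^*|$ such that every agent in $V_A^*$ is $k_1$-loyal (to $A$) and every agent in $V_B^*$ is $k_2$-loyal (to $B$). Then the profile admits a unique stable assignment.
   Context: Agents $V=\{v_1,\dots,v_n\}$; two alternatives $A,B$. Each agent $v_i$ has a strict total order $\succ_i$ on $\{A,B\}\times\{1,\dots,n\}$, where $(S,j)$ means being in the community adopting $S$ of size $j$; it is monotonic if $(S,j)\succ_i(S,k)$ whenever $k<j$. For $S\in\{A,B\}$ with $S'$ the other alternative, $V_S^*$ is the set of agents with $(S,n)\succ_i(S',n)$. Agent $v_i$ is $k$-loyal to $S$ if $v_i\in V_S^*$ and $(S,k)\succ_i(S',n)$. An assignment is a map $f:V\to\{A,B\}$; $v_i$ prefers $f$ to $g$ if $(f(v_i),|f^{-1}(f(v_i))|)\succ_i(g(v_i),|g^{-1}(g(v_i))|)$. An assignment $f$ is stable if there is no assignment $f'\neq f$ such that every agent $v_i$ with $f'(v_i)\neq f(v_i)$ prefers $f'$ to $f$. *)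

(* Defs.v *)
From mathcomp Require Import all_boot.
Set Implicit Arguments. Unset Strict Implicit. Unset Printing Implicit Defensive.

Definition alt := bool.
Definition altA : alt := true.
Definition altB : alt := false.
Definition other (S : alt) : alt := ~~ S.

(* An outcome (S, j): being in the community adopting S, of size j. *)
Definition outcome := (alt * nat)%type.
Definition in_dom (n : nat) (x : outcome) : bool := (1 <= x.2 <= n).

(* r x y means x is strictly preferred to y; r is a strict total order on
   {A,B} x {1..n}. *)
Definition strict_total_order_on (n : nat) (r : rel outcome) : Prop :=
  [/\ (forall x, in_dom n x -> ~~ r x x),
      (forall x y z, in_dom n x -> in_dom n y -> in_dom n z ->
          r x y -> r y z -> r x z) &
      (forall x y, in_dom n x -> in_dom n y -> x <> y -> r x y \/ r y x)].

Definition profile (n : nat) := 'I_n -> rel outcome.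

Definition is_profile (n : nat) (P : profile n) : Prop :=
  forall i, strict_total_order_on n (P i).

Definition monotonic (n : nat) (P : profile n) : Prop :=
  forall i (S : alt) (j k : nat), 1 <= k -> k < j -> j <= n ->
    P i (S, j) (S, k).

Definition Vstar (n : nat) (P : profile n) (S : alt) : {set 'I_n} :=
  [set i | P i (S, n) (other S, n)].

Definition loyal (n : nat) (P : profile n) (k : nat) (i : 'I_n) (S : alt) : Prop :=
  i \in Vstar P S /\ P i (S, k) (other S, n).

Definition assignment (n : nat) := {ffun 'I_n -> alt}.

Definition comm_size (n : nat) (f : assignment n) (i : 'I_n) : nat :=
  #|[set j | f j == f i]|.

Definition prefers (n : nat) (P : profile n) (i : 'I_n) (f g : assignment n) : Prop :=
  P i (f i, comm_size f i) (g i, comm_size g i).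

Definition stable (n : nat) (P : profile n) (f : assignment n) : Prop :=
  ~ exists f' : assignment n, f' <> f /\
      (forall i, f' i <> f i -> prefers P i f' f).

(* Main.v *)
Require Import Defs.
From mathcomp Require Import all_boot.

Lemma key n (P : profile n) S k i j : is_profile P -> monotonic P ->
  1 <= k -> k <= #|Vstar P S| -> loyal P k i S -> 1 <= j <= n ->
  P i (S, #|Vstar P S|) (other S, j).
Proof.
move=> HP Hm k1 ka [_ Hl] /andP[j1 jn].
have an : #|Vstar P S| <= n by rewrite -[X in _ <= X]card_ord max_card.
have [_ Ht _] := HP i.
have d1 : in_dom n (S, k) by rewrite /in_dom /= k1 (leq_trans ka an).
have d2 : in_dom n (other S, n) by rewrite /in_dom /= (leq_trans j1 jn) leqnn.
have d3 : in_dom n (other S, j) by rewrite /in_dom /= j1 jn.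
have d0 : in_dom n (S, #|Vstar P S|) by rewrite /in_dom /= (leq_trans k1 ka) an.
have H2 : P i (S, k) (other S, j).
  case: (ltngtP j n) jn => // [jlt _|-> _]; last by [].
  exact: Ht d1 d2 d3 Hl (Hm _ _ _ _ j1 jlt (leqnn n)).
case: (ltngtP k #|Vstar P S|) ka => // [klt _|<- _]; last by [].
exact: Ht d0 d1 d3 (Hm _ _ _ _ k1 klt an) H2.
Qed.

Lemma VstarB n (P : profile n) (i : 'I_n) : is_profile P ->
  (i \in Vstar P altB) = (i \notin Vstar P altA).
Proof.
move=> HP; have [Hir Ht Htot] := HP i.
have nn : in_dom n (true, n) by rewrite /in_dom /= leqnn (leq_trans _ (ltn_ord i)).
have nn' : in_dom n (false, n) by rewrite /in_dom /= leqnn (leq_trans _ (ltn_ord i)).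
rewrite !inE /other /=.
case E: (P i (true, n) (false, n)); case E': (P i (false, n) (true, n)) => //.
- by have := Hir _ nn; rewrite (Ht _ _ _ nn nn' nn E E').
- by case: (Htot _ _ nn nn') => //; rewrite ?E ?E'.
Qed.

Lemma csize n (f : assignment n) i : 1 <= comm_size f i <= n.
Proof.
rewrite /comm_size; apply/andP; split.
  by rewrite card_gt0; apply/set0Pn; exists i; rewrite inE.
by rewrite -[X in _ <= X]card_ord max_card.
Qed.

Theorem proposition1 (n : nat) (P : profile n) :
  is_profile P -> monotonic P ->
  (exists k1 k2 : nat,
     [/\ 1 <= k1 <= n, 1 <= k2 <= n,
         k1 <= #|Vstar P altA| & k2 <= #|Vstar P altB|] /\
     (forall i, i \in Vstar P altA -> loyal P k1 i altA) /\
     (forall i, i \in Vstar P altB -> loyal P k2 i altB)) ->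
  exists! f : assignment n, stable P f.
Proof.
move=> HP Hm [k1 [k2 [[/andP[k11 _] /andP[k21 _] ka kb] [HA HB]]]].
have K : forall (S : alt) i, i \in Vstar P S -> forall j, 1 <= j <= n ->
    P i (S, #|Vstar P S|) (other S, j).
  case=> i Hi j Hj.
  - exact: key HP Hm k11 ka (HA i Hi) Hj.
  - exact: key HP Hm k21 kb (HB i Hi) Hj.
pose fs : assignment n := [ffun i => i \in Vstar P altA].
have inV : forall i, i \in Vstar P (fs i).
  move=> i; rewrite ffunE; case h: (i \in Vstar P altA) => //.
  by rewrite (@VstarB _ P _ HP) h.
have eqV : forall j (b : alt), (fs j == b) = (j \in Vstar P b).
  move=> j [|]; rewrite ffunE; first by case: (j \in _).
  by rewrite (@VstarB _ P _ HP); case: (j \in _).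
have cs : forall i, comm_size fs i = #|Vstar P (fs i)|.
  by move=> i; rewrite /comm_size; apply: eq_card => j; rewrite inE eqV.
have dev : forall (g : assignment n) i, g i <> fs i -> P i (fs i, comm_size fs i) (g i, comm_size g i).
  move=> g i Hi; rewrite cs.
  have -> : g i = other (fs i) by move: Hi; rewrite /other; case: (g i); case: (fs i).
  apply: K; [exact: inV | exact: csize].
have asym : forall i x y, in_dom n x -> in_dom n y -> P i x y -> P i y x -> False.
  move=> i x y dx dy h1 h2; have [Hir Ht _] := HP i.
  by have := Hir _ dx; rewrite (Ht _ _ _ dx dy dx h1 h2).
have dom : forall (g : assignment n) i, in_dom n (g i, comm_size g i).
  by move=> g i; rewrite /in_dom /= csize.
exists fs; split.
  move=> [f' [Hne Hd]].
  have [i Hi] : exists i, f' i <> fs i.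
    have : ~~ [forall i, f' i == fs i].
      by apply/negP => /forallP H; apply: Hne; apply/ffunP => i; apply/eqP.
    by case/forallPn => i /eqP; exists i.
  exact: asym (dom fs i) (dom f' i) (dev f' i Hi) (Hd i Hi).
move=> f Hf; apply/ffunP => i; case: (fs i =P f i) => // Hne; exfalso.
apply: Hf; exists fs; split; first by move=> E; apply: Hne; rewrite E.
move=> j Hj; exact: dev f j (fun e => Hj (esym e)).
Qed.
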